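(* Suppose $U_1,\dots,U_N,V_1,\dots,V_n\in\mathbb{R}^d$ form a margin-$m$, relative-bias-$0$ embedding of $S_{n,k}$ with $0<m<1$. Then for every $T\subset[n]$ with $\max\bigl\{1,\,k-\frac{2m(n-k)}{1-m}\bigr\}\le|T|\le k$ there exist $h\in\mathbb{S}^{d-1}$ and $c\in\mathbb{R}$ such that $\langle h,V_i\rangle\ge c$ for all $i\in T$ and $\langle h,V_j\rangle\le c$ for all $j\notin T$.
   Context: $S_{n,k}\in\{0,1\}^{\binom{n}{k}\times n}$ (so $N=\binom nk$) is the matrix whose rows are all the distinct vectors in $\{0,1\}^n$ with exactly $k$ ones, each appearing exactly once. For $A\in\{0,1\}^{N\times n}$ and $m\ge0$, unit vectors $U_1,\dots,U_N,V_1,\dots,V_n\in\mathbb{R}^d$ form a margin-$m$, relative-bias-$0$ embedding of $A$ if $\langle U_j,V_i\rangle\ge m$ whenever $A_{ji}=1$ and $\langle U_j,V_i\rangle\le -m$ whenever $A_{ji}=0$. *)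

(* Defs.v *)
From mathcomp Require Import all_boot all_order all_algebra.
From mathcomp Require Import reals.
Set Implicit Arguments. Unset Strict Implicit. Unset Printing Implicit Defensive.
Import Order.TTheory GRing.Theory Num.Theory.
Local Open Scope ring_scope.

Definition dotp (R : realType) (d : nat) (u v : 'rV[R]_d) : R :=
  \sum_(l < d) u 0 l * v 0 l.

Definition unitv (R : realType) (d : nat) (u : 'rV[R]_d) : Prop :=
  dotp u u = 1.

(* Row index type of S_{n,k}: the k-subsets of [n] = 'I_n, each appearing
   exactly once; row A of S_{n,k} is the indicator vector of A. *)
Definition Snk_rows (n k : nat) : finType := {A : {set 'I_n} | #|A| == k}.

Definition Snk (n k : nat) : Snk_rows n k -> 'I_n -> bool :=
  fun A i => i \in val A.

Definition embedding (R : realType) (d n : nat) (I : finType)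
  (A : I -> 'I_n -> bool) (m : R)
  (U : I -> 'rV[R]_d) (V : 'I_n -> 'rV[R]_d) : Prop :=
  (forall j, unitv (U j)) /\ (forall i, unitv (V i)) /\
  (forall j i, A j i -> m <= dotp (U j) (V i)) /\
  (forall j i, ~~ A j i -> dotp (U j) (V i) <= - m).

(* Main.v *)
Require Import Defs.
From mathcomp Require Import all_boot all_order all_algebra.
From mathcomp Require Import reals.
From mathcomp Require Import ring lra zify.
Import Order.TTheory GRing.Theory Num.Theory.
Set Implicit Arguments. Unset Strict Implicit. Unset Printing Implicit Defensive.

Lemma card_super (n k : nat) (X : {set 'I_n}) : #|X| <= k ->
  #|[set B : {set 'I_n} | (X \subset B) && (#|B| == k)]| = 'C(n - #|X|, k - #|X|).
Proof.
move=> hX.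
have hC : #|~: X| = n - #|X|.
  by have := cardsC X; rewrite card_ord; move: (#|~: X|) (#|X|) => a b <-; rewrite addKn.
rewrite -hC -cards_draws.
have -> : [set A : {set 'I_n} | A \subset ~: X & (#|A| == k - #|X|)] =
   (fun B => B :\: X) @: [set B : {set 'I_n} | (X \subset B) && (#|B| == k)].
  apply/setP => A; rewrite inE; apply/andP/imsetP.
  - move=> [hA /eqP hc]; exists (X :|: A).
      rewrite inE subsetUl /= cardsU.
      have -> : X :&: A = set0.
        apply/setP => x; rewrite !inE; apply/negbTE; apply/negP => /andP[hx hxa].
        by move/subsetP: hA => /(_ x hxa); rewrite inE hx.
      by rewrite cards0 subn0 hc subnKC.
    rewrite setDUl setDv set0U; apply/setP => x; rewrite !inE.
    case hxa: (x \in A); rewrite ?andbF ?andbT //.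
    by move/subsetP: hA => /(_ x hxa); rewrite inE.
  - move=> [B]; rewrite inE => /andP[hXB /eqP hB] ->; split.
      by apply/subsetP => x; rewrite !inE => /andP[].
    by rewrite cardsD hB (setIidPr hXB).
rewrite card_in_imset //.
move=> B1 B2; rewrite !inE => /andP[h1 _] /andP[h2 _] e.
by rewrite -[B1](setID B1 X) -[B2](setID B2 X) (setIidPr h1) (setIidPr h2) e.
Qed.

Local Open Scope ring_scope.

Section Dot.
Variables (R : realType) (d : nat).

Lemma dotp_suml (I : finType) (P : pred I) (F : I -> 'rV[R]_d) v :
  dotp (\sum_(i | P i) F i) v = \sum_(i | P i) dotp (F i) v.
Proof.
rewrite /dotp; under eq_bigr do rewrite summxE mulr_suml.
by rewrite exchange_big.
Qed.

Lemma dotpZl a (u v : 'rV[R]_d) : dotp (a *: u) v = a * dotp u v.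
Proof.
rewrite /dotp mulr_sumr; apply: eq_bigr => l _; by rewrite mxE mulrA.
Qed.

Lemma dotpC (u v : 'rV[R]_d) : dotp u v = dotp v u.
Proof. by apply: eq_bigr => l _; rewrite mulrC. Qed.

Lemma dotp_ge0 (u : 'rV[R]_d) : 0 <= dotp u u.
Proof. by apply: sumr_ge0 => l _; rewrite -expr2 sqr_ge0. Qed.

Lemma dotp_eq0 (u v : 'rV[R]_d) : dotp u u = 0 -> dotp u v = 0.
Proof.
move=> h; rewrite /dotp big1 // => l _.
have hp : forall i : 'I_d, xpredT i -> 0 <= u 0 i * u 0 i.
  by move=> i _; rewrite -expr2 sqr_ge0.
have := @psumr_eq0P _ _ xpredT (fun l => u 0 l * u 0 l) hp h l isT.
move=> /eqP; rewrite mulf_eq0 orbb => /eqP ->; by rewrite mul0r.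
Qed.

Lemma dotp_le1 (u v : 'rV[R]_d) : unitv u -> unitv v -> dotp u v <= 1.
Proof.
rewrite /unitv => hu hv.
have : 0 <= \sum_(l < d) (u 0 l - v 0 l) ^+ 2 by apply: sumr_ge0 => l _; apply: sqr_ge0.
have -> : \sum_(l < d) (u 0 l - v 0 l) ^+ 2 = dotp u u + dotp v v - 2 * dotp u v.
  rewrite /dotp mulr_sumr -big_split -sumrB /=; apply: eq_bigr => l _; ring.
rewrite hu hv; lra.
Qed.
End Dot.

Theorem propositionG2 (R : realType) (d n k : nat) (m : R)
  (U : Snk_rows n k -> 'rV[R]_d) (V : 'I_n -> 'rV[R]_d) :
  embedding (Snk (n:=n) (k:=k)) m U V ->
  0 < m -> m < 1 ->
  forall T : {set 'I_n},
    Num.max 1 (k%:R - 2 * m * (n%:R - k%:R) / (1 - m)) <= #|T|%:R ->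
    (#|T| <= k)%N ->
    exists (h : 'rV[R]_d) (c : R),
      unitv h /\
      (forall i, i \in T -> c <= dotp h (V i)) /\
      (forall j, j \notin T -> dotp h (V j) <= c).
Proof.
move=> [hU [hV [hpos hneg]]] m0 m1 T hmax htk.
move: hmax; rewrite ge_max => /andP[ht1 hq].
set t := #|T| in ht1 hq htk *.
have h1m : 0 < 1 - m by lra.
have key : (k%:R - t%:R) * (1 - m) <= 2 * m * (n%:R - k%:R).
  have : k%:R - t%:R <= 2 * m * (n%:R - k%:R) / (1 - m) by lra.
  by rewrite ler_pdivlMr.
have htk' : (t%:R : R) <= k%:R by rewrite ler_nat.
have hkn : (k <= n)%N.
  rewrite leqNgt; apply/negP => hnk.
  have : (n%:R : R) < k%:R by rewrite ltr_nat.
  move=> hnk'; nra.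
pose F := [set B : {set 'I_n} | (T \subset B) && (#|B| == k)].
pose U' := fun B : {set 'I_n} =>
  if (insub B : option (Snk_rows n k)) is Some A then U A else 0.
have hF : forall B, B \in F -> forall i,
   [/\ (i \in B -> m <= dotp (U' B) (V i)),
       (i \notin B -> dotp (U' B) (V i) <= - m) &
       dotp (U' B) (V i) <= 1].
  move=> B; rewrite inE => /andP[_ hB] i.
  rewrite /U' (insubT (fun B : {set 'I_n} => #|B| == k) hB) /=.
  split.
  - by move=> hi; apply: hpos.
  - by move=> hi; apply: hneg.
  - exact: dotp_le1.
pose h0 := \sum_(B in F) U' B.
pose W := #|F|.
have hW : W = 'C(n - t, k - t) by apply: card_super.
have Wpos : (0 < W)%N by rewrite hW bin_gt0 leq_sub2r.
have Wr : (1 : R) <= W%:R by rewrite ler1n.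
have hT : forall i, i \in T -> W%:R * m <= dotp h0 (V i).
  move=> i hi; rewrite /h0 dotp_suml mulr_natl -sumr_const.
  apply: ler_sum => B hB; have [h1 _ _] := hF B hB i; apply: h1.
  by move: hB; rewrite inE => /andP[/subsetP /(_ i hi)].
have hJ : forall j, j \notin T -> dotp h0 (V j) <= W%:R * m.
  move=> j hj.
  pose Fj := [set B : {set 'I_n} | (j |: T \subset B) && (#|B| == k)].
  have e1 : \sum_(B in F) ((1 + m) * (j \in B)%:R - m)
            = (1 + m) * #|Fj|%:R - W%:R * m.
    have es : (\sum_(B in F) (j \in B) = #|Fj|)%N.
      rewrite -(_ : [set B | (B \in F) && (j \in B)] = Fj); last first.
        apply/setP => B; rewrite !inE subUset sub1set.
        by case: (j \in B); case: (T \subset B); case: (#|B| == k).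
      rewrite -sum1dep_card big_mkcondr; apply: eq_bigr => B _; by case: (j \in B).
    rewrite sumrB sumr_const -mulr_sumr -[m *+ #|F|]mulr_natl -/W.
    by rewrite -natr_sum es.
  have ecount : (#|Fj| * (n - t) = W * (k - t))%N.
    case: (ltnP t k) => htk2.
    - rewrite /Fj card_super; last by rewrite cardsU1 hj.
      rewrite cardsU1 hj add1n hW !subnS mulnC mul_bin_diag prednK ?subn_gt0 //.
      by rewrite mulnC.
    - have -> : (k - t = 0)%N by apply/eqP; rewrite subn_eq0.
      rewrite muln0.
      suff -> : #|Fj| = 0%N by [].
      apply/eqP; rewrite cards_eq0; apply/eqP/setP => B; rewrite !inE.
      apply/negbTE; apply/negP => /andP[hs /eqP hB].
      have := subset_leq_card hs; rewrite cardsU1 hj hB; lia.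
  have hle : dotp h0 (V j) <= (1 + m) * #|Fj|%:R - W%:R * m.
    rewrite -e1 /h0 dotp_suml; apply: ler_sum => B hB.
    have [h1 h2 h3] := hF B hB j.
    case: (boolP (j \in B)) => hjB /=.
    + by rewrite mulr1; lra.
    + by rewrite mulr0; have := h2 hjB; lra.
  have htn : (t < n)%N.
    have := cardsC T; rewrite card_ord => e.
    have : (0 < #|~: T|)%N by apply/card_gt0P; exists j; rewrite inE.
    rewrite /t; lia.
  have ec : (#|Fj|%:R : R) * (n%:R - t%:R) = W%:R * (k%:R - t%:R).
    by rewrite -!natrB ?(ltnW htn) // -!natrM ecount.
  have hnt : (0 : R) < n%:R - t%:R by rewrite subr_gt0 ltr_nat.
  have Wge0 : (0 : R) <= W%:R by lra.
  have A : (1 + m) * (k%:R - t%:R) <= 2 * m * (n%:R - t%:R) by nra.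
  have B : (1 + m) * #|Fj|%:R * (n%:R - t%:R) <= 2 * m * W%:R * (n%:R - t%:R).
    rewrite -mulrA ec; nra.
  rewrite ler_pM2r // in B.
  lra.
have s0 : 0 < dotp h0 h0.
  rewrite lt_def dotp_ge0 andbT; apply/eqP => e0.
  have [i hi] : exists i, i \in T.
    apply/card_gt0P; rewrite -/t -(ltr_nat R); lra.
  have := hT i hi; rewrite (dotp_eq0 _ e0); nra.
pose sq := Num.sqrt (dotp h0 h0).
have sq0 : 0 < sq by rewrite sqrtr_gt0.
exists (sq^-1 *: h0), (sq^-1 * (W%:R * m)); split.
  rewrite /unitv dotpZl dotpC dotpZl.
  have e : dotp h0 h0 = sq ^+ 2 by rewrite sqr_sqrtr // ltW.
  rewrite e; field; lra.
split => i hi; rewrite dotpZl; apply: ler_wpM2l; rewrite ?invr_ge0 ?(ltW sq0) //.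
  exact: hT.
exact: hJ.
Qed.
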